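(* Let $B$ be a Batanin tree and $A$ a full $(n-1)$-sphere of $T\mathrm{Pos}(B)$ such that $\dim B<n$. Then for every weak $\omega$-category $\mathbb X=(X,\alpha)$ and every morphism of globular sets $f\colon\mathrm{Pos}(B)\to X$, the coherence cell $\mathrm{coh}^{\mathbb X}(B,A,f)$ is invertible.
   Context: Batanin trees are generated inductively: for every finite list $B_1,\dots,B_n$ ($n\ge0$) of Batanin trees there is a tree $[B_1,\dots,B_n]$; $\dim[B_1,\dots,B_n]=\max_i(\dim B_i+1)$ (and $\dim[\,]=0$). The suspension $\Sigma Y$ of a globular set has $0$-cells $v_-,v_+$ and $(\Sigma Y)_{n+1}=Y_n$, every $1$-cell going from $v_-$ to $v_+$. $\mathrm{Pos}([B_1,\dots,B_n])=\Sigma\mathrm{Pos}(B_1)\vee\cdots\vee\Sigma\mathrm{Pos}(B_n)$, the wedge gluing $v_+$ of each summand to $v_-$ of the next (a single point if $n=0$). Boundary trees: $\partial_0B=[\,]$, $\partial_{k+1}[B_1,\dots,B_n]=[\partial_kB_1,\dots,\partial_kB_n]$, with cosource/cotarget inclusions $s^B_k,t^B_k\colon\mathrm{Pos}(\partial_kB)\to\mathrm{Pos}(B)$ ($s^B_0$ picks the leftmost $0$-position, $t^B_0$ the rightmost, $s^B_{k+1}=\bigvee_i\Sigma s^{B_i}_k$, $t^B_{k+1}=\bigvee_i\Sigma t^{B_i}_k$). $T$ is the free weak $\omega$-category monad on globular sets (Batanin–Leinster), in the computad presentation of Dean et al.: for a globular set $Y$, the $n$-cells of $TY$ are generated by $\mathrm{var}\,y$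 ($y\in Y_n$) and $\mathrm{coh}(B,A,f)$ for a tree $B$ with $\dim B\le n$, a full $(n-1)$-sphere $A$ of $T\mathrm{Pos}(B)$ and a globular map $f\colon\mathrm{Pos}(B)\to TY$; the boundary of $\mathrm{coh}(B,A,f)$ is $A$ with $f$ substituted. An $m$-sphere is a pair of parallel $m$-cells (the unique $(-1)$-sphere is full). A cell of $T\mathrm{Pos}(P)$ covers $P$ if every position of $P$ occurs in it or its iterated boundaries. An $m$-sphere $(u,v)$ of $T\mathrm{Pos}(B)$ is full if $u=T(s^B_m)(u')$, $v=T(t^B_m)(v')$ for $m$-cells $u',v'$ of $T\mathrm{Pos}(\partial_mB)$ covering $\partial_mB$. A weak $\omega$-category is a $T$-algebra $(X,\alpha)$, and $\mathrm{coh}^{\mathbb X}(B,A,f)=\alpha(Tf(\mathrm{coh}(B,A,\mathrm{id})))$ where $\mathrm{id}$ sends each position $p$ to $\mathrm{var}\,p$. It has canonical identities $\mathrm{id}$ and binary compositions $\ast_n$. Invertibility is coinductive: the set $W$ of invertible cells is the largest set of positive-dimensional cells such that every $x\colon u\to v$ in $W$, of dimension $n+1$, admits a cell $\bar x\colon v\to u$ and cells $\eta_x\colon x\ast_n\bar x\to\mathrm{id}(u)$, $\varepsilon_x\colon\bar x\ast_n x\to\mathrm{id}(v)$ in $W$. *)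

(* Defs.v *)
From mathcomp Require Import all_boot.

Set Implicit Arguments.
Unset Strict Implicit.
Unset Printing Implicit Defensive.

Inductive tree : Type := Node of seq tree.

Definition children (B : tree) : seq tree := let: Node l := B in l.
Definition child (B : tree) (i : nat) : tree := nth (Node [::]) (children B) i.

Fixpoint tdim (B : tree) : nat :=
  let: Node l := B in
  (fix aux (l : seq tree) : nat :=
     match l with [::] => 0 | c :: l' => maxn (tdim c).+1 (aux l') end) l.

(* ---------- Positions ----------
   A k-dimensional position of [B1..Bn] is encoded as a list of length k+1:
   [:: j] (j <= n) is the j-th 0-position (wedge point), and i :: p
   (i < n, p a (k-1)-position of B_(i+1)) is the position p of the i-th
   suspension summand.  posl B enumerates all positions of Pos(B). *)
Fixpoint posl (B : tree) : seq (seq nat) :=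
  let: Node l := B in
  [seq [:: j] | j <- iota 0 (size l).+1] ++
  (fix aux (i : nat) (l : seq tree) : seq (seq nat) :=
     match l with
     | [::] => [::]
     | c :: l' => [seq i :: p | p <- posl c] ++ aux i.+1 l'
     end) 0 l.

(* source / target of a positive-dimensional position (junk on 0-positions) *)
Fixpoint psrc (p : seq nat) : seq nat :=
  match p with
  | [:: i; _] => [:: i]
  | i :: p' => i :: psrc p'
  | [::] => [::]
  end.
Fixpoint ptgt (p : seq nat) : seq nat :=
  match p with
  | [:: i; _] => [:: i.+1]
  | i :: p' => i :: ptgt p'
  | [::] => [::]
  end.

Fixpoint bd (k : nat) (B : tree) : tree :=
  match k with 0 => Node [::] | k'.+1 => Node (map (bd k') (children B)) end.

(* cosource / cotarget inclusions s^B_k, t^B_k : Pos(d_k B) -> Pos(B) *)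
Fixpoint sinc (k : nat) (B : tree) (p : seq nat) : seq nat :=
  match k with
  | 0 => [:: 0]
  | k'.+1 => match p with
             | [:: j] => [:: j]
             | i :: p' => i :: sinc k' (child B i) p'
             | [::] => [::]
             end
  end.
Fixpoint tinc (k : nat) (B : tree) (p : seq nat) : seq nat :=
  match k with
  | 0 => [:: size (children B)]
  | k'.+1 => match p with
             | [:: j] => [:: j]
             | i :: p' => i :: tinc k' (child B i) p'
             | [::] => [::]
             end
  end.

(* ---------- raw terms of the free weak omega-category ----------
   rcoh B A fs : the coherence coh(B, A, f); A = None is the (-1)-sphere,
   A = Some (u, v) a sphere of T Pos(B); fs lists f(p) for p in posl B. *)
Inductive rterm (V : Type) : Type :=
| rvar of V
| rcoh of tree & option (rterm (seq nat) * rterm (seq nat)) & seq (rterm V).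
Arguments rvar {V}.
Arguments rcoh {V}.

Fixpoint bind (V W : Type) (g : V -> rterm W) (t : rterm V) : rterm W :=
  match t with
  | rvar v => g v
  | rcoh B A fs => rcoh B A (map (bind g) fs)
  end.

Definition rmap (V W : Type) (g : V -> W) (t : rterm V) : rterm W :=
  bind (fun v => rvar (g v)) t.

Fixpoint vars (V : Type) (t : rterm V) : seq V :=
  match t with
  | rvar v => [:: v]
  | rcoh _ _ fs => flatten (map (@vars V) fs)
  end.

Definition fat (V : Type) (B : tree) (fs : seq (rterm V)) (p : seq nat) : rterm V :=
  nth (rcoh B None [::]) fs (index p (posl B)).

(* a "context": the variables of a globular set Y, with their dimension
   predicate and raw source/target *)
Record ctx := Ctx {
  cV : Type;
  vdim : cV -> nat -> Prop;
  vsrc : cV -> cV;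
  vtgt : cV -> cV }.

Definition rsrc (C : ctx) (t : rterm (cV C)) : rterm (cV C) :=
  match t with
  | rvar v => rvar (@vsrc C v)
  | rcoh B (Some (u, _)) fs => bind (fat B fs) u
  | rcoh _ None _ => t
  end.
Definition rtgt (C : ctx) (t : rterm (cV C)) : rterm (cV C) :=
  match t with
  | rvar v => rvar (@vtgt C v)
  | rcoh B (Some (_, v)) fs => bind (fat B fs) v
  | rcoh _ None _ => t
  end.

Definition ctxPos (B : tree) : ctx :=
  {| cV := seq nat;
     vdim := fun p k => p \in posl B /\ size p = k.+1;
     vsrc := psrc; vtgt := ptgt |}.

Fixpoint supp (C : ctx) (k : nat) (t : rterm (cV C)) : seq (cV C) :=
  vars t ++ match k with
            | 0 => [::]
            | k'.+1 => supp k' (rsrc t) ++ supp k' (rtgt t)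
            end.

Definition covers (B : tree) (k : nat) (t : rterm (seq nat)) : Prop :=
  forall p, p \in posl B -> p \in (@supp (ctxPos B) k t : seq (seq nat)).

Definition full_sphere_gen (R : forall C : ctx, rterm (cV C) -> nat -> Prop)
    (B : tree) (m : nat) (u v : rterm (seq nat)) : Prop :=
  R (ctxPos B) u m /\ R (ctxPos B) v m /\
  (0 < m -> @rsrc (ctxPos B) u = @rsrc (ctxPos B) v /\
            @rtgt (ctxPos B) u = @rtgt (ctxPos B) v) /\
  exists u' v' : rterm (seq nat),
    R (ctxPos (bd m B)) u' m /\ covers (bd m B) m u' /\
    R (ctxPos (bd m B)) v' m /\ covers (bd m B) m v' /\
    u = rmap (sinc m B) u' /\ v = rmap (tinc m B) v'.

Definition gmap_gen (R : forall C : ctx, rterm (cV C) -> nat -> Prop)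
    (C : ctx) (B : tree) (fs : seq (rterm (cV C))) : Prop :=
  size fs = size (posl B) /\
  forall p, p \in posl B ->
    R C (fat B fs p) (size p).-1 /\
    (1 < size p -> rsrc (fat B fs p) = fat B fs (psrc p) /\
                   rtgt (fat B fs p) = fat B fs (ptgt p)).

(* wt C t n : t is an n-cell of T(Y) *)
Inductive wt : forall C : ctx, rterm (cV C) -> nat -> Prop :=
| wt_var (C : ctx) (v : cV C) (n : nat) : @vdim C v n -> wt (rvar v) n
| wt_coh (C : ctx) (B : tree) A (fs : seq (rterm (cV C))) (n : nat) :
    tdim B <= n ->
    ((n = 0 /\ A = None) \/
     (exists m u v, n = m.+1 /\ A = Some (u, v) /\ full_sphere_gen wt B m u v)) ->
    @gmap_gen wt C B fs ->
    wt (rcoh B A fs) n.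

Definition full_sphere := full_sphere_gen wt.

Record gset := GSet {
  gcell : nat -> Type;
  gsrc : forall n, gcell n.+1 -> gcell n;
  gtgt : forall n, gcell n.+1 -> gcell n;
  gsrc_src : forall n (x : gcell n.+2), gsrc (gsrc x) = gsrc (gtgt x);
  gtgt_tgt : forall n (x : gcell n.+2), gtgt (gsrc x) = gtgt (gtgt x) }.
Arguments gsrc {g n}.
Arguments gtgt {g n}.

Definition gvsrc (X : gset) (v : {n & gcell X n}) : {n & gcell X n} :=
  let: existT k c := v in
  match k return gcell X k -> {n & gcell X n} with
  | 0 => fun c => existT _ 0 c
  | m.+1 => fun c => existT _ m (gsrc c)
  end c.
Definition gvtgt (X : gset) (v : {n & gcell X n}) : {n & gcell X n} :=
  let: existT k c := v in
  match k return gcell X k -> {n & gcell X n} with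
  | 0 => fun c => existT _ 0 c
  | m.+1 => fun c => existT _ m (gtgt c)
  end c.

Definition ctxG (X : gset) : ctx :=
  {| cV := {n & gcell X n};
     vdim := fun v n => projT1 v = n;
     vsrc := @gvsrc X; vtgt := @gvtgt X |}.

(* the variables of TTY: cells of TY *)
Definition ctxT (C : ctx) : ctx :=
  {| cV := {k & rterm (cV C)};
     vdim := fun v n => projT1 v = n /\ wt (projT2 v) (projT1 v);
     vsrc := fun v => existT _ (projT1 v).-1 (rsrc (projT2 v));
     vtgt := fun v => existT _ (projT1 v).-1 (rtgt (projT2 v)) |}.

Record talg (X : gset) := TAlg {
  alpha : forall n, rterm {k & gcell X k} -> gcell X n;
  alpha_src : forall n (t : rterm (cV (ctxG X))), wt t n.+1 ->
    gsrc (alpha n.+1 t) = alpha n (rsrc t);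
  alpha_tgt : forall n (t : rterm (cV (ctxG X))), wt t n.+1 ->
    gtgt (alpha n.+1 t) = alpha n (rtgt t);
  alpha_unit : forall n (x : gcell X n), alpha n (rvar (existT _ n x)) = x;
  alpha_mult : forall n (t : rterm (cV (ctxT (ctxG X)))), wt t n ->
    alpha n (rmap (fun v : {k & rterm {k & gcell X k}} =>
                     existT (gcell X) (projT1 v) (alpha (projT1 v) (projT2 v))) t)
    = alpha n (bind (fun v : {k & rterm {k & gcell X k}} => projT2 v) t) }.

Definition gmapX (X : gset) (B : tree) (f : seq nat -> {k & gcell X k}) : Prop :=
  forall p, p \in posl B ->
    projT1 (f p) = (size p).-1 /\
    (1 < size p -> gvsrc (f p) = f (psrc p) /\ gvtgt (f p) = f (ptgt p)).

Definition cohX (X : gset) (alg : talg X) (B : tree)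
    (A : option (rterm (seq nat) * rterm (seq nat)))
    (f : seq nat -> {k & gcell X k}) (n : nat) : gcell X n :=
  alpha alg n (rmap f (rcoh B A [seq rvar p | p <- posl B])).

(* disk tree D_n and the tree C_n of a binary composite along dimension n *)
Definition Dtree (n : nat) : tree := iter n (fun t => Node [:: t]) (Node [::]).
Definition Ctree (n : nat) : tree :=
  iter n (fun t => Node [:: t]) (Node [:: Node [::]; Node [::]]).

(* canonical identity of an n-cell u : coh(D_n, (d_n, d_n), u) *)
Definition ident (X : gset) (alg : talg X) (n : nat) (u : gcell X n) : gcell X n.+1 :=
  let top := nseq n.+1 0 in
  let f := fun p : seq nat =>
    let k := (size p).-1 in
    if k == n then existT (gcell X) n u
    else if last 0 p == 0 then iter (n - k) (@gvsrc X) (existT _ n u)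
    else gvtgt (iter (n - k).-1 (@gvsrc X) (existT _ n u)) in
  cohX alg (Dtree n)
       (Some (rvar (sinc n (Dtree n) top), rvar (tinc n (Dtree n) top))) f n.+1.

(* canonical binary composite x *_n y of (n+1)-cells (diagrammatic order:
   x : a -> b, y : b -> c gives x *_n y : a -> c) *)
Definition comp (X : gset) (alg : talg X) (n : nat) (x y : gcell X n.+1) :
    gcell X n.+1 :=
  let top := nseq n.+1 0 in
  let f := fun p : seq nat =>
    let k := (size p).-1 in
    if k == n.+1 then existT (gcell X) n.+1 (if nth 0 p n == 0 then x else y)
    else if (k == n) && (last 0 p == 2) then gvtgt (existT (gcell X) n.+1 y)
    else if last 0 p == 0 then iter (n.+1 - k) (@gvsrc X) (existT _ n.+1 x)
    else gvtgt (iter (n - k) (@gvsrc X) (existT _ n.+1 x)) in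
  cohX alg (Ctree n)
       (Some (rvar (sinc n (Ctree n) top), rvar (tinc n (Ctree n) top))) f n.+1.

(* invertible cells (coinductive); a positive-dimensional cell of
   dimension n+1 is x : gcell X n.+1 *)
CoInductive invertible (X : gset) (alg : talg X) : forall n, gcell X n.+1 -> Prop :=
| inv_intro (n : nat) (x xb : gcell X n.+1) (eta eps : gcell X n.+2) :
    gsrc xb = gtgt x -> gtgt xb = gsrc x ->
    gsrc eta = comp alg x xb -> gtgt eta = ident alg (gsrc x) ->
    gsrc eps = comp alg xb x -> gtgt eps = ident alg (gtgt x) ->
    invertible alg eta -> invertible alg eps ->
    invertible alg x.

(* Main.v *)
Require Import Defs.
From Stdlib Require List.
From mathcomp Require Import all_boot zify.
From Stdlib Require Import Lia.
Set Implicit Arguments. Unset Strict Implicit. Unset Printing Implicit Defensive.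


Lemma In_cat T (x : T) s1 s2 : List.In x (s1 ++ s2) <-> List.In x s1 \/ List.In x s2.
Proof. elim: s1 => [|y s IH] /=; [tauto|]. rewrite IH; tauto. Qed.

Lemma In_flatten_map T U (h : T -> seq U) x t s :
  List.In t s -> List.In x (h t) -> List.In x (flatten (map h s)).
Proof.
elim: s => [|y s IH] //= [<-|H] Hx; apply/In_cat; first by left.
by right; apply: IH.
Qed.

Lemma In_flatten_map_inv T U (h : T -> seq U) x s :
  List.In x (flatten (map h s)) -> exists t, List.In t s /\ List.In x (h t).
Proof.
elim: s => [|y s IH] //= /In_cat [H|H]; first by exists y; split => //; left.
by have [t [Ht Hx]] := IH H; exists t; split => //; right.
Qed.

Lemma In_nth T (d : T) t s : List.In t s -> exists i, i < size s /\ nth d s i = t.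
Proof.
elim: s => [|y s IH] //= [<-|H]; first by exists 0.
by have [i [Hi Ht]] := IH H; exists i.+1.
Qed.

Lemma map_ext_In T U (f g : T -> U) s :
  (forall x, List.In x s -> f x = g x) -> map f s = map g s.
Proof.
elim: s => //= x s IH H; rewrite H; last by left.
by rewrite IH // => y Hy; apply: H; right.
Qed.

Section RInd.
Variables (V : Type) (P : rterm V -> Prop).
Hypothesis Hv : forall v, P (rvar v).
Hypothesis Hc : forall B A fs, (forall t, List.In t fs -> P t) -> P (rcoh B A fs).
Fixpoint rterm_ind2 (t : rterm V) : P t :=
  match t with
  | rvar v => Hv v
  | rcoh B A fs => Hc B A ((fix go (l : seq (rterm V)) : forall t, List.In t l -> P t :=
       match l return forall t, List.In t l -> P t with
       | [::] => fun t H => False_ind _ H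
       | t' :: l' => fun t H => match H with
                  | or_introl E => eq_ind t' P (rterm_ind2 t') t E
                  | or_intror H' => go l' t H' end end) fs)
  end.
End RInd.

Lemma bind_ext V W (g h : V -> rterm W) t :
  (forall x, List.In x (vars t) -> g x = h x) -> bind g t = bind h t.
Proof.
elim/rterm_ind2: t => [v|B A fs IH] /= H; first by apply: H; left.
congr rcoh; apply: map_ext_In => t Ht; apply: IH => // x Hx; apply: H.
exact: In_flatten_map Ht Hx.
Qed.

Lemma bind_rvar V (t : rterm V) : bind rvar t = t.
Proof.
elim/rterm_ind2: t => //= B A fs IH; congr rcoh.
rewrite -[RHS]map_id; exact: map_ext_In.
Qed.

Lemma bind_bind U V W (g : V -> rterm W) (h : U -> rterm V) t :
  bind g (bind h t) = bind (fun x => bind g (h x)) t.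
Proof.
elim/rterm_ind2: t => //= B A fs IH; congr rcoh.
rewrite -map_comp; exact: map_ext_In.
Qed.

Lemma fat_map_bind V W (g : V -> rterm W) B fs p :
  fat B (map (bind g) fs) p = bind g (fat B fs p).
Proof.
rewrite /fat; case: (ltnP (index p (posl B)) (size fs)) => H.
  by rewrite (nth_map (rcoh B None [::])).
by rewrite !nth_default ?size_map.
Qed.

Lemma fat_map V B (h : seq nat -> rterm V) p :
  p \in posl B -> fat B (map h (posl B)) p = h p.
Proof. by move=> Hp; rewrite /fat (nth_map p) ?index_mem ?nth_index. Qed.

Section WtInd.
Local Unset Implicit Arguments.
Variable P : forall C : ctx, rterm (cV C) -> nat -> Prop.
Hypothesis Hv : forall C (v : cV C) n, vdim v n -> P C (rvar v) n.
Hypothesis Hc : forall C B A (fs : seq (rterm (cV C))) n, tdim B <= n ->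
    ((n = 0 /\ A = None) \/
     (exists m u v, n = m.+1 /\ A = Some (u, v) /\ full_sphere B m u v)) ->
    @gmap_gen wt C B fs ->
    (forall p, p \in posl B -> P C (fat B fs p) (size p).-1) -> P C (rcoh B A fs) n.
Fixpoint wt_ind2 C t n (H : @wt C t n) {struct H} : P C t n :=
  match H in @wt C t n return P C t n with
  | wt_var C v n Hv' => Hv C v n Hv'
  | wt_coh C B A fs n Hd Hs Hg => Hc C B A fs n Hd Hs Hg (fun p Hp =>
      match Hg with conj _ Hall => match Hall p Hp with conj Hw _ => wt_ind2 C _ _ Hw end end)
  end.
End WtInd.

Definition isvar_dim C (t : rterm (cV C)) n : Prop :=
  match t with rvar x => vdim x n | _ => True end.
Lemma wt_isvar C (t : rterm (cV C)) n : wt t n -> isvar_dim t n.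
Proof. by case. Qed.
Lemma wt_rvar_inv C (x : cV C) n : wt (rvar x) n -> vdim x n.
Proof. exact: (@wt_isvar C (rvar x)). Qed.

Definition cohinv C (t : rterm (cV C)) n : Prop :=
  match t with
  | rcoh B A fs => tdim B <= n /\
    ((n = 0 /\ A = None) \/
     (exists m u v, n = m.+1 /\ A = Some (u, v) /\ full_sphere B m u v)) /\
    @gmap_gen wt C B fs
  | _ => True end.
Lemma wt_cohinv C (t : rterm (cV C)) n : wt t n -> cohinv t n.
Proof. by case. Qed.
Lemma wt_coh_inv C B A (fs : seq (rterm (cV C))) n : wt (rcoh B A fs) n ->
  tdim B <= n /\
    ((n = 0 /\ A = None) \/
     (exists m u v, n = m.+1 /\ A = Some (u, v) /\ full_sphere B m u v)) /\
    @gmap_gen wt C B fs.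
Proof. exact: (@wt_cohinv C (rcoh B A fs)). Qed.


Definition leaf := Node [::].

Definition ff_elim (P : Prop) (H : false = true) : P :=
  match (match H in _ = b return (if b then False else True) with erefl => I end) with end.

Fixpoint tree_ind2 (P : tree -> Prop)
  (H : forall l, (forall i, i < size l -> P (nth leaf l i)) -> P (Node l))
  (t : tree) {struct t} : P t :=
  match t with Node l => H l ((fix go (l : seq tree) :
        forall i, i < size l -> P (nth leaf l i) :=
     match l return forall i, i < size l -> P (nth leaf l i) with
     | [::] => fun i Hi => ff_elim _ Hi
     | c :: l' => fun i => match i return i < size (c :: l') -> P (nth leaf (c :: l') i) with
                  | 0 => fun _ => tree_ind2 H c
                  | i'.+1 => fun Hi => go l' i' Hi end
     end) l)
  end.

Fixpoint posaux (i : nat) (l : seq tree) : seq (seq nat) :=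
  match l with [::] => [::] | c :: l' => [seq i :: p | p <- posl c] ++ posaux i.+1 l' end.

Lemma poslE l : posl (Node l) = [seq [:: j] | j <- iota 0 (size l).+1] ++ posaux 0 l.
Proof. rewrite /=; congr (_ :: (_ ++ _)); elim: l 0 => //= c l IH i; by rewrite IH. Qed.

Lemma mem_posaux i l p : p \in posaux i l ->
  exists j p', [/\ j < size l, p' \in posl (nth leaf l j) & p = (i + j) :: p'].
Proof.
elim: l i => [|c l IH] i //=; rewrite mem_cat => /orP [/mapP [p' Hp' ->]|/IH [j [p' [Hj Hp' ->]]]].
  by exists 0, p'; rewrite addn0.
by exists j.+1, p'; rewrite addSnnS.
Qed.

Lemma posaux_mem i l j p' : j < size l -> p' \in posl (nth leaf l j) ->
  (i + j) :: p' \in posaux i l.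
Proof.
elim: l i j => [|c l IH] i [|j] //= Hj Hp; rewrite mem_cat.
  by rewrite addn0 map_f.
by rewrite -addSnnS IH ?orbT.
Qed.

Lemma mem_posl l p : p \in posl (Node l) ->
  (exists j, j <= size l /\ p = [:: j]) \/
  (exists j p', [/\ j < size l, p' \in posl (nth leaf l j) & p = j :: p']).
Proof.
rewrite poslE mem_cat => /orP [/mapP [j Hj ->]|/mem_posaux H]; last by right.
by left; exists j; rewrite mem_iota add0n ltnS in Hj.
Qed.

Lemma posl_mem0 l j : j <= size l -> [:: j] \in posl (Node l).
Proof. by move=> Hj; rewrite poslE mem_cat map_f // mem_iota add0n ltnS. Qed.

Lemma posl_mem1 l j p' : j < size l -> p' \in posl (nth leaf l j) -> j :: p' \in posl (Node l).
Proof. by move=> Hj Hp; rewrite poslE mem_cat (posaux_mem 0 Hj Hp) orbT. Qed.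

Fixpoint tdaux (l : seq tree) : nat :=
  match l with [::] => 0 | c :: l' => maxn (tdim c).+1 (tdaux l') end.
Lemma tdimE l : tdim (Node l) = tdaux l.
Proof. by elim: l => //= c l ->. Qed.

Lemma tdim_child l i : i < size l -> tdim (nth leaf l i) < tdim (Node l).
Proof.
rewrite tdimE; elim: l i => [|c l IH] [|i] //= Hi; first by rewrite leq_maxl.
by apply: leq_trans (IH _ Hi) (leq_maxr _ _).
Qed.

Lemma tdim0 l : tdim (Node l) <= 0 -> l = [::].
Proof. by case: l => // c l; rewrite tdimE /= geq_max. Qed.

Lemma posl_size B p : p \in posl B -> 0 < size p <= (tdim B).+1.
Proof.
elim/tree_ind2: B p => l IH p /mem_posl [[j [_ ->]]|[j [p' [Hj Hp' ->]]]] //=.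
have /andP [H1 H2] := IH _ Hj _ Hp'; rewrite ltnS.
exact: leq_trans H2 (tdim_child Hj).
Qed.

Lemma psrc_cons i p : 1 < size p -> psrc (i :: p) = i :: psrc p.
Proof. by case: p => [|a [|b p]]. Qed.
Lemma ptgt_cons i p : 1 < size p -> ptgt (i :: p) = i :: ptgt p.
Proof. by case: p => [|a [|b p]]. Qed.

Lemma size_psrc p : 1 < size p -> size (psrc p) = (size p).-1 /\ size (ptgt p) = (size p).-1.
Proof.
elim: p => [|i p IH] //=; case: p IH => [|a [|b p]] //= IH _.
by have [-> ->] := IH isT.
Qed.

Lemma psrc_glob p : 2 < size p -> psrc (psrc p) = psrc (ptgt p) /\ ptgt (psrc p) = ptgt (ptgt p).
Proof.
elim: p => [|i p IH] // Hs; have Hs' : 1 < size p by [].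
case: (ltnP 2 (size p)) => H.
  have [S1 S2] := size_psrc Hs'.
  have H' : 1 < (size p).-1 by case: (size p) H => [|[|[|n]]].
  have Hsp : 1 < size (psrc p) by rewrite S1.
  have Htp : 1 < size (ptgt p) by rewrite S2.
  rewrite psrc_cons // ptgt_cons // !psrc_cons // !ptgt_cons //.
  by have [-> ->] := IH H.
by clear IH; case: p Hs' H {Hs} => [|a [|b [|c p]]].
Qed.

Lemma posl_psrc B p : p \in posl B -> 1 < size p ->
  psrc p \in posl B /\ ptgt p \in posl B.
Proof.
elim/tree_ind2: B p => l IH p /mem_posl [[j [_ ->]]|[j [p' [Hj Hp' ->]]]] // _.
case: p' Hp' => [|a [|b p']] Hp'.
- by have := posl_size Hp'.
- by rewrite !posl_mem0 // ltnW.
- have [H1 H2] := IH _ Hj _ Hp' isT.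
  by rewrite (psrc_cons j (isT : 1 < size [:: a, b & p'])) (ptgt_cons j (isT : 1 < size [:: a, b & p'])); split; apply: posl_mem1.
Qed.

Lemma uniq_posaux i l : (forall j, j < size l -> uniq (posl (nth leaf l j))) ->
  uniq (posaux i l).
Proof.
elim: l i => [|c l IH] i //= H; rewrite cat_uniq.
apply/and3P; split.
- by rewrite map_inj_uniq; [exact: (H 0) | move=> p q []].
- apply/hasPn => q /mem_posaux [j [p' [_ _ ->]]]; apply/mapP => [[p _ []]].
  by move=> E; move: (leq_addr j i.+1); rewrite E ltnn.
- by apply: IH => j Hj; apply: (H j.+1).
Qed.

Lemma uniq_posl B : uniq (posl B).
Proof.
elim/tree_ind2: B => l IH; rewrite poslE cat_uniq; apply/and3P; split.
- by rewrite map_inj_uniq ?iota_uniq // => a b [].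
- apply/hasPn => q /mem_posaux [j [p' [Hj Hp' ->]]]; apply/mapP => [[k _ []]] _ E.
  by move: (posl_size Hp'); rewrite E.
- exact: uniq_posaux.
Qed.

Lemma bd_id B k : tdim B <= k -> bd k B = B.
Proof.
elim/tree_ind2: B k => l IH [|k] Hd; first by rewrite (tdim0 Hd).
rewrite /=; congr Node; apply: (@eq_from_nth _ leaf); rewrite ?size_map // => i Hi.
rewrite (nth_map leaf) // IH //.
by rewrite -ltnS; apply: leq_trans (tdim_child Hi) Hd.
Qed.

Lemma sinc_id B k p : tdim B <= k -> p \in posl B -> sinc k B p = p /\ tinc k B p = p.
Proof.
elim/tree_ind2: B k p => l IH [|k] p Hd.
  by rewrite (tdim0 Hd) => /mem_posl [[j [Hj ->]]|[j [p' [//]]]]; case: j Hj.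
move=> /mem_posl [[j [Hj ->]]|[j [p' [Hj Hp' ->]]]] //.
case: p' Hp' => [|a p'] Hp'; first by have := posl_size Hp'.
have Hd' : tdim (nth leaf l j) <= k by rewrite -ltnS; apply: leq_trans (tdim_child Hj) Hd.
by have [E1 E2] := IH _ Hj _ _ Hd' Hp'; rewrite /= /child /= E1 E2.
Qed.


Definition good (C D : ctx) (g : cV C -> rterm (cV D)) : Prop :=
  forall x k, vdim x k -> wt (g x) k /\
    (0 < k -> rsrc (g x) = g (vsrc x) /\ rtgt (g x) = g (vtgt x)).

Lemma rsrc_bind C D (g : cV C -> rterm (cV D)) (t : rterm (cV C)) :
  (forall x, t = rvar x -> rsrc (g x) = g (vsrc x) /\ rtgt (g x) = g (vtgt x)) ->
  rsrc (bind g t) = bind g (rsrc t) /\ rtgt (bind g t) = bind g (rtgt t).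
Proof.
case: t => [x|B [[a b]|] fs] H /=; first exact: H.
  by rewrite !bind_bind; split; apply: bind_ext => y _; rewrite fat_map_bind.
by [].
Qed.

Lemma rsrc_bind_wt C D (t : rterm (cV C)) k (g : cV C -> rterm (cV D)) :
  wt t k.+1 -> good g ->
  rsrc (bind g t) = bind g (rsrc t) /\ rtgt (bind g t) = bind g (rtgt t).
Proof.
move=> H Hg; apply: rsrc_bind => x E; move: H; rewrite E => /wt_rvar_inv Hx.
exact: (proj2 (Hg _ _ Hx)).
Qed.

Lemma wt_bind C (t : rterm (cV C)) n : wt t n ->
  forall D (g : cV C -> rterm (cV D)), good g -> wt (bind g t) n.
Proof.
move=> H; move: C t n H.
apply: (wt_ind2 (fun C t n => forall D (g : cV C -> rterm (cV D)), good g -> wt (bind g t) n)).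
  by move=> C x n Hx D g Hgood /=; case: (Hgood _ _ Hx).
move=> C B A fs n Hd Hs Hg IH D g Hgood /=.
apply: wt_coh => //; split; first by rewrite size_map; case: Hg.
move=> p Hp; rewrite !fat_map_bind; split; first exact: IH.
move=> Hsz; have [Hw Hst] := proj2 Hg p Hp.
have [E1 E2] := Hst Hsz.
rewrite -E1 -E2; apply: rsrc_bind => x Ex.
move: Hw; rewrite Ex => /wt_rvar_inv Hx; apply: (proj2 (Hgood _ _ Hx)).
by case: (size p) Hsz => [|[|k]].
Qed.

Lemma fat_good C B (fs : seq (rterm (cV C))) :
  gmap_gen wt B fs -> good (C := ctxPos B) (fat B fs).
Proof.
case=> _ H x k [/= Hx Hs]; have [Hw Hst] := H x Hx.
rewrite Hs /= in Hw Hst; split => // Hk; exact: Hst.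
Qed.

Definition dimctx (C : ctx) := forall (x : cV C) k,
  vdim x k.+1 -> vdim (vsrc x) k /\ vdim (vtgt x) k.
Definition globctx (C : ctx) := forall (x : cV C) k, vdim x k.+2 ->
  vsrc (vsrc x) = vsrc (vtgt x) /\ vtgt (vsrc x) = vtgt (vtgt x).

Lemma wt_rsrc C (HC : dimctx C) (t : rterm (cV C)) k :
  wt t k.+1 -> wt (rsrc t) k /\ wt (rtgt t) k.
Proof.
case: t => [x|B A fs] H.
  by have [H1 H2] := HC _ _ (wt_rvar_inv H); split; apply: wt_var.
have [Hd [Hs Hg]] := wt_coh_inv H.
case: Hs => [[//]|[m [a [b [[Em] [EA Hf]]]]]]; subst m A.
case: Hf => Ha [Hb _]; split; apply: wt_bind (fat_good Hg); assumption.
Qed.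

Lemma wt_glob C (HC : globctx C) (t : rterm (cV C)) k :
  wt t k.+2 -> rsrc (rsrc t) = rsrc (rtgt t) /\ rtgt (rsrc t) = rtgt (rtgt t).
Proof.
case: t => [x|B A fs] H /=.
  by have [-> ->] := HC _ _ (wt_rvar_inv H).
have [Hd [Hs Hg]] := wt_coh_inv H.
case: Hs => [[//]|[m [a [b [[Em] [EA Hf]]]]]]; subst m A.
case: Hf => Ha [Hb [Hpar _]]; have [Ea Eb] := Hpar isT.
have Hga := fat_good Hg.
have [Sa Ta] := rsrc_bind_wt Ha Hga; have [Sb Tb] := rsrc_bind_wt Hb Hga.
by rewrite /= Sa Ta Sb Tb Ea Eb.
Qed.

Lemma vars_wt C (t : rterm (cV C)) n : wt t n ->
  forall x, List.In x (vars t) -> exists k, vdim x k.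
Proof.
move=> H; move: C t n H.
apply: (wt_ind2 (fun (C : ctx) (t : rterm (cV C)) (n : nat) => forall x : cV C, List.In x (vars t) -> exists k, vdim x k)).
  by move=> C v n Hv x /= [<-|//]; exists n.
move=> C B A fs n Hd Hs Hg IH x /= Hx0.
have [t [Ht Hx]] := In_flatten_map_inv Hx0.
have [i [Hi Et]] := In_nth (rcoh B None [::]) Ht.
case: Hg => Hsz _.
have Hp : nth [::] (posl B) i \in posl B.
  by apply: mem_nth; move: Hi; rewrite Hsz.
apply: (IH _ Hp); rewrite /fat index_uniq ?Et ?uniq_posl //.
by move: Hi; rewrite Hsz.
Qed.


Notation PB B := (ctxPos B).

Lemma dimPB B : dimctx (PB B).
Proof.
move=> x k [/= Hx Hs]; have H1 : 1 < size x by rewrite Hs.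
have [S1 S2] := size_psrc H1; have [M1 M2] := posl_psrc Hx H1.
by rewrite /= S1 S2 Hs.
Qed.

Lemma globPB B : globctx (PB B).
Proof. by move=> x k [/= _ Hs]; apply: psrc_glob; rewrite Hs. Qed.

Lemma gmap_h C Q (h : seq nat -> rterm (cV C)) :
  (forall p, p \in posl Q -> wt (h p) (size p).-1 /\
     (1 < size p -> rsrc (h p) = h (psrc p) /\ rtgt (h p) = h (ptgt p))) ->
  gmap_gen wt Q (map h (posl Q)).
Proof.
move=> H; split; first by rewrite size_map.
move=> p Hp; rewrite fat_map //; have [Hw Hst] := H p Hp; split => // H1.
have [M1 M2] := posl_psrc Hp H1; rewrite !fat_map //; exact: Hst.
Qed.

Lemma vars_PB B t n x : wt (C := PB B) t n -> List.In x (vars t) -> x \in posl B.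
Proof. by move=> H Hx; have [k [Hk _]] := vars_wt H Hx. Qed.

Lemma bind_fat_PB B V (h : seq nat -> rterm V) t n : wt (C := PB B) t n ->
  bind (fat B (map h (posl B))) t = bind h t.
Proof. by move=> H; apply: bind_ext => x Hx; rewrite fat_map // (vars_PB H Hx). Qed.

Definition idB B : seq (rterm (seq nat)) := [seq rvar p | p <- posl B].

Lemma bind_idB B t n : wt (C := PB B) t n -> bind (fat B (idB B)) t = t.
Proof. by move=> H; rewrite (bind_fat_PB _ H) bind_rvar. Qed.

Lemma rmap_inc_id B k t n : tdim B <= k -> wt (C := PB B) t n ->
  rmap (sinc k B) t = t /\ rmap (tinc k B) t = t.
Proof.
move=> Hd H; split; rewrite /rmap -[RHS]bind_rvar; apply: bind_ext => x Hx;
by have [E1 E2] := sinc_id Hd (vars_PB H Hx); rewrite ?E1 ?E2.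
Qed.

Lemma gmap_idB B : gmap_gen wt (C := PB B) B (idB B).
Proof.
apply: gmap_h => p Hp; split => //.
apply: wt_var; split => //=; by have /andP [H1 _] := posl_size Hp; rewrite prednK.
Qed.

Lemma wt_cohid B n a b : tdim B <= n.+1 -> full_sphere B n a b ->
  wt (C := PB B) (rcoh B (Some (a, b)) (idB B)) n.+1.
Proof.
move=> Hd Hf; apply: wt_coh => //; last exact: gmap_idB.
by right; exists n, a, b.
Qed.

Lemma supp_sub B k (t : rterm (seq nat)) (x : seq nat) :
  x \in (@supp (PB B) k (rsrc (C := PB B) t) : seq (seq nat)) ->
  x \in (@supp (PB B) k.+1 t : seq (seq nat)).
Proof. by move=> H; rewrite /= !mem_cat H orbT. Qed.

Lemma full_facts B m u v : full_sphere B m u v -> tdim B <= m ->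
  [/\ wt (C := PB B) u m, wt (C := PB B) v m, covers B m u & covers B m v].
Proof.
move=> [Hu [Hv [_ [u0 [v0 [Hu0 [Cu0 [Hv0 [Cv0 [Eu Ev]]]]]]]]]] Hd.
rewrite bd_id // in Hu0 Cu0 Hv0 Cv0.
have [E1 _] := rmap_inc_id Hd Hu0; have [_ E2] := rmap_inc_id Hd Hv0.
by rewrite Eu Ev E1 E2.
Qed.

Lemma full_swap B m u v : full_sphere B m u v -> tdim B <= m -> full_sphere B m v u.
Proof.
move=> Hf Hd; have [Hu Hv Cu Cv] := full_facts Hf Hd.
case: Hf => _ [_ [Hpar _]]; split => //; split => //; split.
  by move=> H; have [-> ->] := Hpar H.
have [E1 E2] := rmap_inc_id Hd Hv; have [E3 E4] := rmap_inc_id Hd Hu.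
by exists v, u; rewrite bd_id //.
Qed.


Definition topm m := nseq m.+1 0.

Lemma tdim1 t : tdim (Node [:: t]) = (tdim t).+1.
Proof. by rewrite tdimE /= maxn0. Qed.
Lemma tdim_Ctree m : tdim (Ctree m) = m.+1.
Proof. by elim: m => // m IH; rewrite /Ctree iterS -/(Ctree m) tdim1 IH. Qed.
Lemma tdim_Dtree m : tdim (Dtree m) = m.
Proof. by elim: m => // m IH; rewrite /Dtree iterS -/(Dtree m) tdim1 IH. Qed.

Lemma rcons_nseq0 k : rcons (nseq k 0) 0 = nseq k.+1 0.
Proof. by elim: k => //= k ->. Qed.

Lemma psrc_rn k e : psrc (rcons (nseq k.+1 0) e) = rcons (nseq k 0) 0 /\
                    ptgt (rcons (nseq k.+1 0) e) = rcons (nseq k 0) 1.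
Proof.
elim: k => // k [IH1 IH2].
have H : 1 < size (rcons (nseq k.+1 0) e) by rewrite size_rcons.
have -> : rcons (nseq k.+2 0) e = 0 :: rcons (nseq k.+1 0) e by [].
by rewrite psrc_cons // ptgt_cons // IH1 IH2.
Qed.

Lemma psrc_Cp m e : psrc (nseq m 0 ++ [:: e; 0]) = rcons (nseq m 0) e /\
                    ptgt (nseq m 0 ++ [:: e; 0]) = rcons (nseq m 0) e.+1.
Proof.
elim: m => // m [IH1 IH2].
have H : 1 < size (nseq m 0 ++ [:: e; 0]) by rewrite size_cat addn2.
have -> : nseq m.+1 0 ++ [:: e; 0] = 0 :: (nseq m 0 ++ [:: e; 0]) by [].
by rewrite psrc_cons // ptgt_cons // IH1 IH2.
Qed.

Definition Cpos m p :=
  (exists k e, [/\ k < m, e < 2 & p = rcons (nseq k 0) e]) \/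
  (exists e, e < 3 /\ p = rcons (nseq m 0) e) \/
  (exists e, e < 2 /\ p = nseq m 0 ++ [:: e; 0]).
Definition Dpos m p :=
  (exists k e, [/\ k < m, e < 2 & p = rcons (nseq k 0) e]) \/ p = topm m.

Lemma mem_posl1 t p : p \in posl (Node [:: t]) ->
  p = [:: 0] \/ p = [:: 1] \/ exists p', p' \in posl t /\ p = 0 :: p'.
Proof.
move/mem_posl => [[j [Hj ->]]|[j [p' [Hj Hp ->]]]].
  by case: j Hj => [|[|]]; auto.
by case: j Hj Hp => // _ Hp; right; right; exists p'.
Qed.

Lemma posl_Ctree m p : p \in posl (Ctree m) -> Cpos m p.
Proof.
elim: m p => [|m IH] p.
  rewrite (_ : posl (Ctree 0) = [:: [:: 0]; [:: 1]; [:: 2]; [:: 0; 0]; [:: 1; 0]]) //.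
  rewrite !inE; case/orP => [/eqP ->|]; first by right; left; exists 0.
  case/orP => [/eqP ->|]; first by right; left; exists 1.
  case/orP => [/eqP ->|]; first by right; left; exists 2.
  case/orP => /eqP ->; first by right; right; exists 0.
  by right; right; exists 1.
rewrite /Ctree iterS -/(Ctree m) => /mem_posl1 [->|[->|[p' [Hp ->]]]].
- by left; exists 0, 0.
- by left; exists 0, 1.
case: (IH _ Hp) => [[k [e [Hk He ->]]]|[[e [He ->]]|[e [He ->]]]].
- by left; exists k.+1, e.
- by right; left; exists e.
- by right; right; exists e.
Qed.

Lemma posl_Dtree m p : p \in posl (Dtree m) -> Dpos m p.
Proof.
elim: m p => [|m IH] p.
  by rewrite (_ : posl (Dtree 0) = [:: [:: 0]]) // inE => /eqP ->; right.
rewrite /Dtree iterS -/(Dtree m) => /mem_posl1 [->|[->|[p' [Hp ->]]]].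
- by left; exists 0, 0.
- by left; exists 0, 1.
case: (IH _ Hp) => [[k [e [Hk He ->]]]|->].
- by left; exists k.+1, e.
- by right.
Qed.

Lemma Dpos_Cpos m p : Dpos m p -> Cpos m p.
Proof.
case=> [[k [e [Hk He ->]]]|->]; first by left; exists k, e; split => //; apply: ltnW.
by right; left; exists 0; rewrite /topm -rcons_nseq0.
Qed.

Lemma posl1_mem t p : p \in posl t -> 0 :: p \in posl (Node [:: t]).
Proof. by move=> H; apply: (@posl_mem1 [:: t] 0). Qed.

Lemma mem_Ctree_B m e : e < 3 -> rcons (nseq m 0) e \in posl (Ctree m).
Proof.
elim: m => [|m IH] He; first by case: e He => [|[|[|]]].
by rewrite /Ctree iterS -/(Ctree m) /=; apply: posl1_mem; apply: IH.
Qed.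

Lemma mem_Dtree_top m : topm m \in posl (Dtree m).
Proof.
elim: m => [|m IH] //.
by rewrite /Dtree iterS -/(Dtree m); apply: posl1_mem; apply: IH.
Qed.

Lemma sinc_C m : sinc m (Ctree m) (topm m) = topm m /\
                 tinc m (Ctree m) (topm m) = rcons (nseq m 0) 2.
Proof.
elim: m => // m [IH1 IH2].
by rewrite /Ctree iterS -/(Ctree m) /topm /= -/(topm m) /child /= IH1 IH2.
Qed.

Lemma sinc_D m : sinc m (Dtree m) (topm m) = topm m /\
                 tinc m (Dtree m) (topm m) = topm m.
Proof.
elim: m => // m [IH1 IH2].
by rewrite /Dtree iterS -/(Dtree m) /topm /= -/(topm m) /child /= IH1 IH2.
Qed.

Lemma bd_C m : bd m (Ctree m) = Dtree m.
Proof.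
by elim: m => // m IH; rewrite /Ctree /Dtree !iterS -/(Ctree m) -/(Dtree m) /= IH.
Qed.

Lemma rsrc_rvar B (p : seq nat) : @rsrc (PB B) (rvar p) = rvar (psrc p) /\
  @rtgt (PB B) (rvar p) = rvar (ptgt p).
Proof. by []. Qed.

Lemma supp_rvar B k (p : seq nat) : @supp (PB B) k.+1 (rvar p) =
  p :: (@supp (PB B) k (rvar (psrc p)) ++ @supp (PB B) k (rvar (ptgt p))).
Proof. by []. Qed.

Lemma supp_top B k j e : (j < k -> e < 2 ->
   rcons (nseq j 0) e \in (@supp (PB B) k (rvar (topm k)) : seq (seq nat))) /\
   topm k \in (@supp (PB B) k (rvar (topm k)) : seq (seq nat)).
Proof.
elim: k j => [|k IH] j; first by split => //; rewrite /= inE.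
split; first last. by rewrite supp_rvar in_cons eqxx.
move=> Hj He; rewrite supp_rvar in_cons; apply/orP; right; rewrite mem_cat.
have [P1 P2] := psrc_rn k 0.
rewrite rcons_nseq0 in P1 P2; rewrite P1 P2 rcons_nseq0 -/(topm k).
case: (ltnP j k) => Hjk.
  by rewrite (proj1 (IH j) Hjk He).
have -> : j = k by apply/eqP; rewrite eqn_leq Hjk -ltnS Hj.
case: e He IH => [|[|//]] _ IH; first by rewrite rcons_nseq0 -/(topm k) (proj2 (IH 0)).
by apply/orP; right; case: k {IH P1 P2 Hj Hjk} => [|k]; rewrite ?supp_rvar in_cons eqxx.
Qed.

Lemma covers_D m : covers (Dtree m) m (rvar (topm m)).
Proof.
move=> p /posl_Dtree [[k [e [Hk He ->]]]|->].
  exact: (proj1 (supp_top _ _ _ e) Hk He).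
exact: (proj2 (supp_top _ _ 0 0)).
Qed.

Lemma wt_top Q m p : p \in posl Q -> size p = m.+1 -> wt (C := PB Q) (rvar p) m.
Proof. by move=> H1 H2; apply: wt_var. Qed.

Lemma full_C m : full_sphere (Ctree m)
  m (rvar (sinc m (Ctree m) (topm m))) (rvar (tinc m (Ctree m) (topm m))).
Proof.
split; last split; last split.
- rewrite (proj1 (sinc_C m)); apply: wt_top; last by rewrite size_nseq.
  by rewrite /topm -rcons_nseq0; exact: mem_Ctree_B.
- rewrite (proj2 (sinc_C m)); apply: wt_top; last by rewrite size_rcons size_nseq.
  exact: mem_Ctree_B.
- rewrite (proj1 (sinc_C m)) (proj2 (sinc_C m)) => Hm.
  case: m Hm => // m _; rewrite /topm -rcons_nseq0 !(proj1 (rsrc_rvar _ _)) !(proj2 (rsrc_rvar _ _)).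
  by have [-> ->] := psrc_rn m 0; have [-> ->] := psrc_rn m 2.
exists (rvar (topm m)), (rvar (topm m)); rewrite bd_C.
have Hw : wt (C := PB (Dtree m)) (rvar (topm m)) m.
  by apply: wt_top; rewrite ?mem_Dtree_top // size_nseq.
by do !split => //; exact: covers_D.
Qed.

Lemma full_D m : full_sphere (Dtree m)
  m (rvar (sinc m (Dtree m) (topm m))) (rvar (tinc m (Dtree m) (topm m))).
Proof.
have [-> ->] := sinc_D m.
have Hw : wt (C := PB (Dtree m)) (rvar (topm m)) m.
  by apply: wt_top; rewrite ?mem_Dtree_top // size_nseq.
split => //; split => //; split => //.
exists (rvar (topm m)), (rvar (topm m)); rewrite bd_id ?tdim_Dtree //.
have [E1 E2] := sinc_D m.
by do !split => //; rewrite /rmap /= ?E1 ?E2 //; exact: covers_D.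
Qed.


Section Main.
Variables (X : gset) (alg : talg X).
Notation CG := (ctxG X).

Definition ell (t : rterm {k & gcell X k}) (j : nat) : {k & gcell X k} :=
  existT _ j (alpha alg j t).

Lemma dimCG : dimctx CG.
Proof. by move=> [j c] k /= Hj; subst j. Qed.

Lemma gvsrc_ell k t : wt (C := CG) t k.+1 ->
  gvsrc (ell t k.+1) = ell (rsrc t) k /\ gvtgt (ell t k.+1) = ell (rtgt t) k.
Proof. by move=> H; rewrite /ell /= (alpha_src alg H) (alpha_tgt alg H). Qed.

Lemma wt_iter C (HC : dimctx C) i j (t : rterm (cV C)) : wt t j -> i <= j ->
  wt (iter i (@rsrc C) t) (j - i).
Proof.
elim: i => [|i IH] H Hij; first by rewrite subn0.
rewrite iterS; have Hj : j - i = (j - i.+1).+1 by rewrite subnS prednK // subn_gt0.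
by apply: (proj1 (wt_rsrc HC _)); rewrite -Hj; apply: IH => //; apply: ltnW.
Qed.

Lemma iter_ell i j t : i <= j -> wt (C := CG) t j ->
  iter i (@gvsrc X) (ell t j) = ell (iter i (@rsrc CG) t) (j - i).
Proof.
elim: i => [|i IH] Hij H; first by rewrite subn0.
rewrite !iterS IH ?(ltnW Hij) //.
have Hj : j - i = (j - i.+1).+1 by rewrite subnS prednK // subn_gt0.
have Hw := wt_iter dimCG H (ltnW Hij); rewrite Hj in Hw *.
by rewrite (proj1 (gvsrc_ell Hw)).
Qed.

Lemma iter_bind C D (HC : dimctx C) i j (t : rterm (cV C)) (g : cV C -> rterm (cV D)) :
  wt t j -> i <= j -> good g ->
  iter i (@rsrc D) (bind g t) = bind g (iter i (@rsrc C) t).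
Proof.
elim: i => [|i IH] H Hij Hg //.
rewrite !iterS IH ?(ltnW Hij) //.
have Hj : j - i = (j - i.+1).+1 by rewrite subnS prednK // subn_gt0.
have Hw := wt_iter HC H (ltnW Hij); rewrite Hj in Hw.
exact: (proj1 (rsrc_bind_wt Hw Hg)).
Qed.

Definition gf (f : seq nat -> {k & gcell X k}) (p : seq nat) : rterm (cV CG) := rvar (f p).

Lemma good_gf B f : gmapX B f -> good (C := PB B) (D := CG) (gf f).
Proof.
move=> Hf x k [/= Hx Hs]; have [H1 H2] := Hf x Hx.
split; first by apply: wt_var; rewrite /= H1 Hs.
move=> Hk; have [E1 E2] : gvsrc (f x) = f (psrc x) /\ gvtgt (f x) = f (ptgt x) by apply: H2; rewrite Hs.
by rewrite /gf /= E1 E2.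
Qed.

Lemma cmult B (g : seq nat -> rterm (cV CG)) (Hgood : good (C := PB B) g)
  Q A n (h : seq nat -> rterm (seq nat)) (F : seq nat -> {k & gcell X k}) :
  wt (C := PB B) (rcoh Q A (map h (posl Q))) n ->
  (forall p, p \in posl Q -> F p = ell (bind g (h p)) (size p).-1) ->
  alpha alg n (rmap F (rcoh Q A [seq rvar p | p <- posl Q])) =
  alpha alg n (bind g (rcoh Q A (map h (posl Q)))).
Proof.
move=> H HF; have [Hd [Hs Hgm]] := wt_coh_inv H.
pose w p := existT (fun _ => rterm (cV CG)) (size p).-1 (bind g (h p)).
pose tT : rterm (cV (ctxT CG)) := rcoh Q A (map (fun p => rvar (w p)) (posl Q)).
have HtT : wt tT n.
  apply: wt_coh => //; apply: gmap_h => p Hp.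
  have [Hw Hst] := proj2 Hgm p Hp; rewrite fat_map // in Hw Hst.
  split; first by apply: wt_var; rewrite /w; split => //=; have := wt_bind Hw Hgood.
  move=> H1; have [E1 E2] := Hst H1; have [M1 M2] := posl_psrc Hp H1.
  rewrite !fat_map // in E1 E2.
  have [S1 S2] := size_psrc H1.
  have Hw' : wt (C := PB B) (h p) ((size p).-2).+1.
    by case: (size p) H1 Hw => [|[|k]].
  have [R1 R2] := rsrc_bind_wt Hw' Hgood.
  by rewrite /w /= S1 S2 R1 R2 E1 E2.
have := alpha_mult alg HtT.
have -> : bind (fun v => projT2 v) tT = bind g (rcoh Q A (map h (posl Q))).
  by rewrite /tT /= -!map_comp.
move=> <-; congr (alpha alg n _); rewrite /rmap /tT /= -!map_comp.
congr rcoh; apply/eq_in_map => p Hp /=; by rewrite HF.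
Qed.

End Main.


Definition xT B u v : rterm (seq nat) := rcoh B (Some (u, v)) (idB B).

Definition hC B m u v (p : seq nat) : rterm (seq nat) :=
  let k := (size p).-1 in
  if k == m.+1 then (if nth 0 p m == 0 then xT B u v else xT B v u)
  else if (k == m) && (last 0 p == 2) then @rtgt (PB B) (xT B v u)
  else if last 0 p == 0 then iter (m.+1 - k) (@rsrc (PB B)) (xT B u v)
  else @rtgt (PB B) (iter (m - k) (@rsrc (PB B)) (xT B u v)).

Definition CTm B m u v : rterm (seq nat) :=
  rcoh (Ctree m) (Some (rvar (sinc m (Ctree m) (topm m)), rvar (tinc m (Ctree m) (topm m))))
    (map (hC B m u v) (posl (Ctree m))).
Definition ITm B m u v : rterm (seq nat) :=
  rcoh (Dtree m) (Some (rvar (sinc m (Dtree m) (topm m)), rvar (tinc m (Dtree m) (topm m))))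
    (map (hC B m u v) (posl (Dtree m))).

Section Eta.
Variables (B : tree) (m : nat) (u v : rterm (seq nat)).
Hypotheses (Hf : full_sphere B m u v) (Hd : tdim B <= m).
Notation sP := (@rsrc (PB B)).
Notation tP := (@rtgt (PB B)).
Notation x := (xT B u v).
Notation xb := (xT B v u).
Notation h := (hC B m u v).

Lemma wt_x : wt (C := PB B) x m.+1.
Proof. by apply: wt_cohid => //; apply: leqW. Qed.
Lemma wt_xb : wt (C := PB B) xb m.+1.
Proof. by apply: wt_cohid; [apply: leqW | apply: full_swap]. Qed.

Lemma hC_A0 k : k <= m -> h (rcons (nseq k 0) 0) = iter (m.+1 - k) sP x.
Proof.
move=> Hk; rewrite /hC size_rcons size_nseq last_rcons /=.
by rewrite ltn_eqF ?ltnS // andbF.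
Qed.
Lemma hC_A1 k : k <= m -> h (rcons (nseq k 0) 1) = tP (iter (m - k) sP x).
Proof.
move=> Hk; rewrite /hC size_rcons size_nseq last_rcons /=.
by rewrite ltn_eqF ?ltnS // andbF.
Qed.
Lemma hC_B2 : h (rcons (nseq m 0) 2) = tP xb.
Proof. by rewrite /hC size_rcons size_nseq last_rcons /= ltn_eqF // eqxx. Qed.
Lemma hC_C e : h (nseq m 0 ++ [:: e; 0]) = if e == 0 then x else xb.
Proof.
rewrite /hC size_cat size_nseq addn2 /= eqxx nth_cat size_nseq ltnn subnn /=.
by [].
Qed.

Lemma wt_iterx i : i <= m.+1 -> wt (C := PB B) (iter i sP x) (m.+1 - i).
Proof. by move=> Hi; have := @wt_iter (PB B) (@dimPB B) i m.+1 x wt_x Hi. Qed.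

Lemma hC_gmap p : Cpos m p -> wt (C := PB B) (h p) (size p).-1 /\
  (1 < size p -> sP (h p) = h (psrc p) /\ tP (h p) = h (ptgt p)).
Proof.
have Hsx := proj1 (wt_rsrc (@dimPB B) wt_x).
have Hgl := wt_glob (@globPB B).
have key : forall k e, k <= m -> e < 2 -> wt (C := PB B) (h (rcons (nseq k 0) e)) k /\
  (0 < k -> sP (h (rcons (nseq k 0) e)) = h (psrc (rcons (nseq k 0) e)) /\
            tP (h (rcons (nseq k 0) e)) = h (ptgt (rcons (nseq k 0) e))).
  move=> k e Hk; case: e => [|[|//]] _.
  - rewrite hC_A0 //; split.
      by have := wt_iterx (leq_subr k m.+1); rewrite subKn // ltnW.
    case: k Hk => // k Hk _; have [-> ->] := psrc_rn k 0.
    rewrite hC_A0 ?hC_A1 ?(ltnW Hk) //; split; last by rewrite subSS.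
    by rewrite -iterS subSS subSn // ltnW.
  - rewrite hC_A1 //; split.
      have := wt_iterx (leq_trans (leq_subr k m) (leqnSn m)).
      rewrite subSn ?leq_subr // subKn // => /(wt_rsrc (@dimPB B)) [].
      by [].
    case: k Hk => // k Hk _; have [-> ->] := psrc_rn k 1.
    rewrite hC_A0 ?hC_A1 ?(ltnW Hk) //.
    have Hw : wt (C := PB B) (iter (m - k.+1) sP x) k.+2.
      have := wt_iterx (leq_trans (leq_subr k.+1 m) (leqnSn m)).
      by rewrite subSn ?leq_subr // subKn.
    have [G1 G2] := Hgl _ _ Hw.
    rewrite -G1 -G2 -!iterS; split.
      by rewrite subnSK // subSn // ltnW.
    by rewrite subnSK.
case=> [[k [e [Hk He ->]]]|[[e [He ->]]|[e [He ->]]]].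
- rewrite size_rcons size_nseq /=; have [K1 K2] := key k e (ltnW Hk) He.
  by split => // H1; apply: K2.
- rewrite size_rcons size_nseq /=.
  case: e He => [|[|[|//]]] _.
  + by have [K1 K2] := key m 0 (leqnn m) isT; split => // H1; apply: K2.
  + by have [K1 K2] := key m 1 (leqnn m) isT; split => // H1; apply: K2.
  rewrite hC_B2; split; first by have := proj1 (wt_rsrc (@dimPB B) wt_x).
  move=> H1.
  have [P1 P2] : psrc (rcons (nseq m 0) 2) = rcons (nseq m.-1 0) 0 /\
                 ptgt (rcons (nseq m 0) 2) = rcons (nseq m.-1 0) 1.
    by case: (m) H1 => // m'' _; exact: psrc_rn.
  rewrite P1 P2 hC_A0 ?hC_A1 ?leq_pred //.
  have -> : m.+1 - m.-1 = 2 by lia.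
  by have -> : m - m.-1 = 1 by lia.
- rewrite size_cat size_nseq addn2 /= hC_C; have [-> ->] := psrc_Cp m e.
  case: e He => [|[|//]] _ /=.
  + split; first exact: wt_x.
    by move=> _; rewrite hC_A0 ?hC_A1 // subSnn subnn.
  + split; first exact: wt_xb.
    by move=> _; rewrite hC_A1 ?hC_B2 // subnn.
Qed.

Notation CT := (CTm B m u v).
Notation IT := (ITm B m u v).

Lemma wt_CT : wt (C := PB B) CT m.+1.
Proof.
apply: wt_coh; first by rewrite tdim_Ctree.
  right; exists m, (rvar (sinc m (Ctree m) (topm m))), (rvar (tinc m (Ctree m) (topm m))).
  by split => //; split => //; exact: full_C.
by apply: gmap_h => p Hp; apply: hC_gmap; apply: posl_Ctree.
Qed.

Lemma wt_IT : wt (C := PB B) IT m.+1.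
Proof.
apply: wt_coh; first by rewrite tdim_Dtree.
  right; exists m, (rvar (sinc m (Dtree m) (topm m))), (rvar (tinc m (Dtree m) (topm m))).
  by split => //; split => //; exact: full_D.
by apply: gmap_h => p Hp; apply: hC_gmap; apply: Dpos_Cpos; apply: posl_Dtree.
Qed.

Lemma h_top : h (topm m) = sP x.
Proof. by rewrite /topm -rcons_nseq0 hC_A0 // subSnn. Qed.

Lemma src_CT : sP CT = sP x /\ tP CT = tP xb.
Proof.
have -> : sP CT = fat (Ctree m) (map h (posl (Ctree m))) (sinc m (Ctree m) (topm m)) by [].
have -> : tP CT = fat (Ctree m) (map h (posl (Ctree m))) (tinc m (Ctree m) (topm m)) by [].
have [-> ->] := sinc_C m.
have M1 : topm m \in posl (Ctree m) by rewrite /topm -rcons_nseq0 mem_Ctree_B.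
have M2 : rcons (nseq m 0) 2 \in posl (Ctree m) by rewrite mem_Ctree_B.
by rewrite !fat_map // h_top hC_B2.
Qed.

Lemma src_IT : sP IT = sP x /\ tP IT = sP x.
Proof.
have -> : sP IT = fat (Dtree m) (map h (posl (Dtree m))) (sinc m (Dtree m) (topm m)) by [].
have -> : tP IT = fat (Dtree m) (map h (posl (Dtree m))) (tinc m (Dtree m) (topm m)) by [].
have [-> ->] := sinc_D m.
by rewrite !fat_map ?mem_Dtree_top // h_top.
Qed.

Lemma full_eta : full_sphere B m.+1 CT IT.
Proof.
have [Hwu _ Cu _] := full_facts Hf Hd.
have Ex : sP x = u by rewrite /= (bind_idB Hwu).
have Hcov : forall t, sP t = sP x -> covers B m.+1 t.
  by move=> t E p Hp; apply: supp_sub; rewrite E Ex; apply: Cu.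
have [S1 T1] := src_CT; have [S2 T2] := src_IT.
split; first exact: wt_CT; split; first exact: wt_IT; split.
  by move=> _; rewrite S1 T1 S2 T2.
exists CT, IT; rewrite bd_id ?leqW //.
have [E1 _] := rmap_inc_id (leqW Hd) wt_CT; have [_ E2] := rmap_inc_id (leqW Hd) wt_IT.
split; first exact: wt_CT; split; first exact: Hcov.
split; first exact: wt_IT; split; first exact: Hcov.
by rewrite E1 E2.
Qed.

End Eta.


Lemma ifFb T b (a c : T) : b = false -> (if b then a else c) = c. Proof. by move->. Qed.
Lemma ifTb T b (a c : T) : b = true -> (if b then a else c) = a. Proof. by move->. Qed.
Arguments ifFb {T b a c}.
Arguments ifTb {T b a c}.

Section Cells.
Variables (X : gset) (alg : talg X).
Variables (B : tree) (m : nat) (u v : rterm (seq nat)) (f : seq nat -> {k & gcell X k}).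
Hypotheses (Hf : full_sphere B m u v) (Hd : tdim B <= m) (Hg : gmapX B f).
Notation CG := (ctxG X).
Notation sP := (@rsrc (PB B)).
Notation tP := (@rtgt (PB B)).
Notation x := (xT B u v).
Notation xb := (xT B v u).
Notation g := (gf f).
Notation cx := (cohX alg B (Some (u, v)) f m.+1).
Notation cxb := (cohX alg B (Some (v, u)) f m.+1).

Lemma wtG t n : wt (C := PB B) t n -> wt (C := CG) (bind g t) n.
Proof. by move=> H; have := wt_bind H (good_gf Hg). Qed.

Lemma srctgt : gsrc cxb = gtgt cx /\ gtgt cxb = gsrc cx.
Proof.
have H1 := wtG (wt_x Hf Hd); have H2 := wtG (wt_xb Hf Hd).
by rewrite (alpha_src alg H2) (alpha_tgt alg H1) (alpha_tgt alg H2) (alpha_src alg H1).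
Qed.

Lemma comp_eq : alpha alg m.+1 (bind g (CTm B m u v)) = Defs.comp alg cx cxb.
Proof.
symmetry; apply: (cmult (alg:=alg) (good_gf Hg) (wt_CT Hf Hd)) => p Hp /=.
have Hk : (size p).-1 <= m.+1.
  by have /andP [_ H] := posl_size Hp; move: H; rewrite tdim_Ctree; case: (size p).
have Hwx := wtG (wt_x Hf Hd).
have Ex : existT (gcell X) m.+1 cx = ell alg (bind g x) m.+1 by [].
rewrite /hC /=; set k := (size p).-1 in Hk *.
case E1: (k == m.+1).
  by rewrite (eqP E1); case: (nth 0 p m == 0).
case E2: ((k == m) && (last 0 p == 2)).
  case/andP: E2 => /eqP -> _.
  have [_ T] := gvsrc_ell alg (wtG (wt_xb Hf Hd)).
  by rewrite -(proj2 (rsrc_bind_wt (wt_xb Hf Hd) (good_gf Hg))); exact: T.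
case E3: (last 0 p == 0).
  rewrite Ex (iter_ell alg (leq_subr _ _) Hwx) subKn //.
  by rewrite (iter_bind (@dimPB B) (wt_x Hf Hd) (leq_subr _ _) (good_gf Hg)).
have Hk' : k <= m by move: E1 Hk; rewrite leq_eqVlt => ->.
have Hi : m - k <= m.+1 by apply: leq_trans (leq_subr _ _) (leqnSn m).
rewrite Ex (iter_ell alg Hi Hwx).
have E4 : m.+1 - (m - k) = k.+1 by lia.
have Hw := wt_iter (@dimCG X) Hwx Hi; rewrite E4 in Hw *.
rewrite (proj2 (gvsrc_ell alg Hw)).
rewrite (iter_bind (@dimPB B) (wt_x Hf Hd) Hi (good_gf Hg)).
have Hw' := wt_iter (@dimPB B) (wt_x Hf Hd) Hi; rewrite E4 in Hw'.
by rewrite (proj2 (rsrc_bind_wt Hw' (good_gf Hg))).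
Qed.
Lemma ident_eq : alpha alg m.+1 (bind g (ITm B m u v)) = ident alg (gsrc cx).
Proof.
have Hwx := wt_x Hf Hd.
have Hsx := proj1 (wt_rsrc (@dimPB B) Hwx).
have Eu : existT (gcell X) m (gsrc cx) = ell alg (bind g (sP x)) m.
  have [S _] := gvsrc_ell alg (wtG Hwx).
  by rewrite -(proj1 (rsrc_bind_wt Hwx (good_gf Hg))) -S.
symmetry; apply: (cmult (alg:=alg) (good_gf Hg) (wt_IT Hf Hd)) => p Hp.
rewrite Eu; cbv zeta.
have HwsG := wtG Hsx.
case: (posl_Dtree Hp) => [[k [e [Hk He ->]]]|->].
  rewrite size_rcons size_nseq succnK last_rcons (ltn_eqF Hk); cbv iota.
  case: e He => [|[|//]] _.
    rewrite eqxx; cbv iota.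
    rewrite (iter_ell alg (leq_subr _ _) HwsG) (subKn (ltnW Hk)).
    rewrite (iter_bind (@dimPB B) Hsx (leq_subr _ _) (good_gf Hg)).
    rewrite hC_A0; last exact: ltnW Hk.
    rewrite (subSn (ltnW Hk)) iterSr.
    reflexivity.
  have E10 : (1 == 0) = false by [].
  rewrite E10; cbv iota.
  have Hi : (m - k).-1 <= m by apply: leq_trans (leq_pred _) (leq_subr _ _).
  rewrite (iter_ell alg Hi HwsG).
  have E4 : m - (m - k).-1 = k.+1 by lia.
  have Hw := wt_iter (@dimCG X) HwsG Hi; rewrite E4 in Hw *.
  rewrite (proj2 (gvsrc_ell alg Hw)).
  rewrite (iter_bind (@dimPB B) Hsx Hi (good_gf Hg)).
  have Hw' := wt_iter (@dimPB B) Hsx Hi; rewrite E4 in Hw'.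
  rewrite (proj2 (rsrc_bind_wt Hw' (good_gf Hg))).
  rewrite hC_A1; last exact: ltnW Hk.
  rewrite -iterSr prednK; last by rewrite subn_gt0.
  reflexivity.
rewrite h_top /topm size_nseq succnK eqxx; cbv iota.
reflexivity.
Qed.

End Cells.


Lemma eta_lemma X (alg : talg X) B m u v (f : seq nat -> {k & gcell X k}) :
  full_sphere B m u v -> tdim B <= m -> gmapX B f ->
  exists CT IT, full_sphere B m.+1 CT IT /\
   gsrc (cohX alg B (Some (CT, IT)) f m.+2) =
     Defs.comp alg (cohX alg B (Some (u, v)) f m.+1) (cohX alg B (Some (v, u)) f m.+1) /\
   gtgt (cohX alg B (Some (CT, IT)) f m.+2) = ident alg (gsrc (cohX alg B (Some (u, v)) f m.+1)).
Proof.
move=> Hf Hd Hg; exists (CTm B m u v), (ITm B m u v).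
have HF := full_eta Hf Hd.
have HwE : wt (C := PB B) (rcoh B (Some (CTm B m u v, ITm B m u v)) (idB B)) m.+2.
  exact: wt_cohid (leqW (leqW Hd)) HF.
have HwEG := wtG Hg HwE.
have [R1 R2] := rsrc_bind_wt HwE (good_gf Hg).
split => //; split.
- rewrite (alpha_src alg HwEG) R1.
  have -> : @rsrc (PB B) (rcoh B (Some (CTm B m u v, ITm B m u v)) (idB B)) =
            bind (fat B (idB B)) (CTm B m u v) by [].
  rewrite (bind_idB (wt_CT Hf Hd)); exact: comp_eq.
- rewrite (alpha_tgt alg HwEG) R2.
  have -> : @rtgt (PB B) (rcoh B (Some (CTm B m u v, ITm B m u v)) (idB B)) =
            bind (fat B (idB B)) (ITm B m u v) by [].
  rewrite (bind_idB (wt_IT Hf Hd)); exact: ident_eq.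
Qed.

Lemma main_inv X (alg : talg X) : forall B m u v (f : seq nat -> {k & gcell X k}),
  full_sphere B m u v -> tdim B <= m -> gmapX B f ->
  invertible alg (cohX alg B (Some (u, v)) f m.+1).
Proof.
cofix CIH; intros B m u v f Hf Hd Hg.
destruct (eta_lemma alg Hf Hd Hg) as [CT1 [IT1 [F1 [S1 T1]]]].
destruct (eta_lemma alg (full_swap Hf Hd) Hd Hg) as [CT2 [IT2 [F2 [S2 T2]]]].
destruct (srctgt alg Hf Hd Hg) as [E1 E2].
exact (inv_intro E1 E2 S1 T1 S2 (eq_trans T2 (f_equal (@ident X alg m) E1))
         (CIH _ _ _ _ _ F1 (leqW Hd) Hg) (CIH _ _ _ _ _ F2 (leqW Hd) Hg)).
Qed.

Theorem proposition3p4 (B : tree) (m : nat) (u v : rterm (seq nat)) :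
  full_sphere B m u v ->
  tdim B < m.+1 ->
  forall (X : gset) (alg : talg X) (f : seq nat -> {k & gcell X k}),
    @gmapX X B f ->
    invertible alg (cohX alg B (Some (u, v)) f m.+1).
Proof. by move=> Hf Hd X alg f Hg; apply: main_inv Hf Hd Hg. Qed.
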